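(* Let $\mathbb{F}$ be a field, let $n\ge 1$, and let $G$ be a finite subgroup of $\mathrm{M}(n,\mathbb{F})$ whose permutation part $\phi(G)$ is a transitive subgroup of $\mathrm{Sym}(n)$. Then $G$ is $\mathrm{M}(n,\mathbb{F})$-conjugate to a subgroup of $\widetilde{\mathrm{M}}(n,\mathbb{F})$.
   Context: $\mathrm{M}(n,\mathbb{F})$ denotes the group of monomial matrices in $\mathrm{GL}(n,\mathbb{F})$; it splits as $\mathrm{D}(n,\mathbb{F})\rtimes \mathrm{P}(n)$, where $\mathrm{D}(n,\mathbb{F})$ is the group of invertible diagonal matrices and $\mathrm{P}(n)$ the group of permutation matrices, identified with $\mathrm{Sym}(n)$ via $\alpha\mapsto[\delta_{i\alpha,j}]_{i,j}$. The map $\phi\colon \mathrm{M}(n,\mathbb{F})\to\mathrm{Sym}(n)$ is $dt\mapsto t$ for $d\in\mathrm{D}(n,\mathbb{F})$, $t\in \mathrm{P}(n)$; $\phi(G)$ is called the permutation part of $G$. $\widetilde{\mathrm{M}}(n,\mathbb{F})$ denotes the group of all $n\times n$ monomial matrices whose non-zero entries are roots of unity in $\mathbb{F}$. *)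

(* Defs.v *)
From HB Require Import structures.
From mathcomp Require Import all_boot all_order all_algebra.
Set Implicit Arguments. Unset Strict Implicit. Unset Printing Implicit Defensive.
Import GRing.Theory.
Local Open Scope ring_scope.

(* Monomial matrices M(n,F): exactly one nonzero entry in each row and each column
   (such matrices are automatically invertible). *)
Definition monomial_mx (F : fieldType) (n : nat) (A : 'M[F]_n) : Prop :=
  (forall i : 'I_n, exists! j : 'I_n, A i j != 0) /\
  (forall j : 'I_n, exists! i : 'I_n, A i j != 0).

Definition root_of_unity (F : fieldType) (x : F) : Prop :=
  exists k : nat, (0 < k)%N /\ x ^+ k = 1.

Definition rootunit_monomial_mx (F : fieldType) (n : nat) (A : 'M[F]_n) : Prop :=
  monomial_mx A /\ (forall i j, A i j != 0 -> root_of_unity (A i j)).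

(* Permutation part phi(A) of a monomial matrix A = d t, t = [delta_{i alpha, j}]:
   phi(A) sends i to the unique j with A i j != 0. *)
Definition perm_part (F : fieldType) (n : nat) (A : 'M[F]_n) (i : 'I_n) : 'I_n :=
  odflt i [pick j | A i j != 0].

(* A finite subgroup of M(n,F), given by the finite list of its elements. *)
Definition finite_monomial_subgroup (F : fieldType) (n : nat) (G : seq 'M[F]_n) : Prop :=
  [/\ 1%:M \in G,
      (forall A, A \in G -> monomial_mx A),
      (forall A B, A \in G -> B \in G -> A *m B \in G) &
      (forall A, A \in G -> invmx A \in G)].

Definition transitive_perm_part (F : fieldType) (n : nat) (G : seq 'M[F]_n) : Prop :=
  forall i j : 'I_n, exists2 A, A \in G & perm_part A i = j.

(* Main.v *)
Require Import Defs.
From mathcomp Require Import all_boot all_order all_algebra.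
From mathcomp Require Import ring.
Set Implicit Arguments. Unset Strict Implicit. Unset Printing Implicit Defensive.
Import GRing.Theory.
Local Open Scope ring_scope.

Section Aux.
Variables (F : fieldType) (n : nat).

Lemma mono_row (A B : 'M[F]_n) i j k : monomial_mx A -> A i j != 0 ->
  (A *m B) i k = A i j * B j k.
Proof.
move=> [hr _] nz; rewrite !mxE (bigD1 j) //= big1 ?addr0 // => j' nj'.
have [x [_ ux]] := hr i.
case: (eqVneq (A i j') 0) => [->|h]; first by rewrite mul0r.
by rewrite -(ux _ h) (ux _ nz) eqxx in nj'.
Qed.

Lemma perm_part_nz (A : 'M[F]_n) i j : monomial_mx A -> perm_part A i = j -> A i j != 0.
Proof.
move=> [hr _]; rewrite /perm_part; case: pickP => [x hx /= <- //|h /= _].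
have [x [hx _]] := hr i; by rewrite h in hx.
Qed.

Lemma root_div (u v : F) : Defs.root_of_unity u -> Defs.root_of_unity v -> Defs.root_of_unity (u / v)%R.
Proof.
move=> [k [hk xk]] [m [hm ym]]; exists (k * m)%N; split; first by rewrite muln_gt0 hk.
by rewrite expr_div_n exprM xk expr1n mulnC exprM ym expr1n divr1.
Qed.

Lemma mono_transfer (A M : 'M[F]_n) : monomial_mx A ->
  (forall i j, (M i j != 0) = (A i j != 0)) -> monomial_mx M.
Proof.
move=> [hr hc] e; split.
- move=> i; have [x [h1 h2]] := hr i; exists x; split; first by rewrite e.
  by move=> y; rewrite e; apply: h2.
- move=> j; have [x [h1 h2]] := hc j; exists x; split; first by rewrite e.
  by move=> y; rewrite e; apply: h2.
Qed.

Lemma diag_mono (d : 'rV[F]_n) : (forall i, d 0 i != 0) -> monomial_mx (diag_mx d).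
Proof.
move=> hd; split.
- move=> i; exists i; split; first by rewrite mxE eqxx mulr1n.
  by move=> y; rewrite mxE; case: (eqVneq i y) => // _; rewrite mulr0n eqxx.
- move=> j; exists j; split; first by rewrite mxE eqxx mulr1n.
  by move=> y; rewrite mxE; case: (eqVneq y j) => // _; rewrite mulr0n eqxx.
Qed.

Lemma root_stab (G : seq 'M[F]_n) (C : 'M[F]_n) (i0 : 'I_n) :
  finite_monomial_subgroup G -> C \in G -> C i0 i0 != 0 -> Defs.root_of_unity (C i0 i0).
Proof.
move=> [_ hm hmul _] CG nz; set c := C i0 i0.
have pw : forall k, exists2 X, X \in G & X i0 i0 = c ^+ k.+1.
  elim=> [|k [X XG XE]]; first by exists C; rewrite ?expr1.
  exists (C *m X); first exact: hmul.
  by rewrite (mono_row _ _ (hm _ CG) nz) XE -/c -exprS.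
set s := map (fun k => c ^+ k.+1) (iota 0 (size G).+1).
have sub : {subset s <= map (fun M : 'M[F]_n => M i0 i0) G}.
  move=> x /mapP [k _ ->]; have [X XG XE] := pw k.
  by apply/mapP; exists X.
have : ~~ uniq s.
  apply/negP => u; have := uniq_leq_size u sub.
  by rewrite !size_map size_iota ltnn.
case/(uniqPn 0) => a [b [ab bs]]; rewrite size_map size_iota in bs.
rewrite !(nth_map 0%N) ?size_iota ?(ltn_trans ab) // !nth_iota ?(ltn_trans ab) //.
rewrite !add0n => e.
exists (b - a)%N; split; first by rewrite subn_gt0.
have -> : (b - a = b.+1 - a.+1)%N by rewrite subSS.
by rewrite expfB ?ltnS // -e divff // expf_neq0.
Qed.

End Aux.

Theorem lemma2p4 (F : fieldType) (n : nat) (G : seq 'M[F]_n) :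
  (0 < n)%N ->
  finite_monomial_subgroup G ->
  transitive_perm_part G ->
  exists P : 'M[F]_n,
    monomial_mx P /\
    (forall A, A \in G -> rootunit_monomial_mx (invmx P *m A *m P)).
Proof.
move=> hn hG ht; have [_ hm hmul _] := hG.
set i0 : 'I_n := Ordinal hn.
have HB : forall j, exists A, (A \in G) && (A i0 j != 0).
  move=> j; have [A AG AE] := ht i0 j; exists A; rewrite AG /=.
  exact: perm_part_nz (hm _ AG) AE.
have HE : forall j, exists A, (A \in G) && (A j i0 != 0).
  move=> j; have [A AG AE] := ht j i0; exists A; rewrite AG /=.
  exact: perm_part_nz (hm _ AG) AE.
pose B j := xchoose (HB j); pose E j := xchoose (HE j).
have BG j : B j \in G by have /andP[] := xchooseP (HB j).
have Bnz j : B j i0 j != 0 by have /andP[] := xchooseP (HB j).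
have EG j : E j \in G by have /andP[] := xchooseP (HE j).
have Enz j : E j j i0 != 0 by have /andP[] := xchooseP (HE j).
pose b := \row_j (B j i0 j); pose bi := \row_j (B j i0 j)^-1.
have Q1 : diag_mx b *m diag_mx bi = 1%:M.
  rewrite mul_diag_mx; apply/matrixP => i j; rewrite !mxE.
  case: eqP => [->|_]; last by rewrite !mulr0n mulr0.
  by rewrite !mulr1n divff.
have [_ Pu] := mulmx1_unit Q1.
have invP : invmx (diag_mx bi) = diag_mx b.
  by rewrite -[LHS]mul1mx -Q1 -mulmxA mulmxV // mulmx1.
exists (diag_mx bi); split.
  by apply: diag_mono => i; rewrite mxE invr_eq0.
move=> A AG; rewrite invP.
have entry i j : (diag_mx b *m A *m diag_mx bi) i j = B i i0 i * A i j / B j i0 j.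
  by rewrite mul_mx_diag mul_diag_mx !mxE.
split.
  apply: mono_transfer (hm _ AG) _ => i j; rewrite entry.
  by rewrite !mulf_eq0 invr_eq0 !negb_or (negPf (Bnz i)) (negPf (Bnz j)) /= !andbT.
move=> i j; rewrite entry !mulf_eq0 !negb_or => /andP[/andP[_ Anz] _].
have h1 : Defs.root_of_unity ((B i *m (A *m E j)) i0 i0).
  apply: (root_stab hG); first exact: hmul (BG i) (hmul _ _ AG (EG j)).
  rewrite (mono_row _ _ (hm _ (BG i)) (Bnz i)) (mono_row _ _ (hm _ AG) Anz).
  by rewrite !mulf_neq0.
have h2 : Defs.root_of_unity ((B j *m E j) i0 i0).
  apply: (root_stab hG); first exact: hmul (BG j) (EG j).
  by rewrite (mono_row _ _ (hm _ (BG j)) (Bnz j)) mulf_neq0.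
have := root_div h1 h2.
rewrite (mono_row _ _ (hm _ (BG i)) (Bnz i)) (mono_row _ _ (hm _ AG) Anz).
rewrite (mono_row _ _ (hm _ (BG j)) (Bnz j)).
have ej := Enz j; have bj := Bnz j.
suff -> : B i i0 i * (A i j * E j j i0) / (B j i0 j * E j j i0)
          = B i i0 i * A i j / B j i0 j by [].
by field; apply/andP; split.
Qed.
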